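(* Let $G$ be a finite group with $|G|\ge4$, $\sigma$ an automorphism of $G$ of order two, and $S$ a symmetric subset of $G$. Let $X$ be one of $C_\Sigma(G,S)$, $C(G,S)^\sigma$, $C_\Sigma(G,S)^\sigma$, and suppose $X$ is undirected. Then $X$ is connected if and only if $S$ generates $G$.
   Context: $C_\Sigma(G,S)$ has vertex set $G$ and an edge from $x$ to $x^{-1}s$ for each $s\in S$; $C(G,S)^\sigma$ has an edge from $x$ to $\sigma(xs)$; $C_\Sigma(G,S)^\sigma$ has an edge from $x$ to $\sigma(x^{-1}s)$. A graph is undirected if its adjacency matrix is symmetric. *)

(* Defs.v *)
From mathcomp Require Import all_boot all_fingroup.
Set Implicit Arguments. Unset Strict Implicit. Unset Printing Implicit Defensive.
Import GroupScope.
Local Open Scope group_scope.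

Inductive graph_kind := CayleySum | TwistedCayley | TwistedCayleySum.

Definition edge_target (gT : finGroupType) (sigma : {perm gT}) (k : graph_kind)
  (x s : gT) : gT :=
  match k with
  | CayleySum => x^-1 * s
  | TwistedCayley => sigma (x * s)
  | TwistedCayleySum => sigma (x^-1 * s)
  end.

Definition adj (gT : finGroupType) (sigma : {perm gT}) (k : graph_kind)
  (S : {set gT}) (x y : gT) : nat :=
  #|[set s in S | edge_target sigma k x s == y]|.

Definition undirected (gT : finGroupType) (sigma : {perm gT}) (k : graph_kind)
  (S : {set gT}) : Prop :=
  forall x y, adj sigma k S x y = adj sigma k S y x.

Definition adj_rel (gT : finGroupType) (sigma : {perm gT}) (k : graph_kind)
  (S : {set gT}) : rel gT := fun x y => 0 < adj sigma k S x y.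

Definition connected_graph (gT : finGroupType) (sigma : {perm gT})
  (k : graph_kind) (S : {set gT}) : Prop :=
  forall x y : gT, connect (adj_rel sigma k S) x y.

(* Main.v *)
Require Import Defs.
From mathcomp Require Import all_boot all_fingroup.
Import GroupScope.
Local Open Scope group_scope.

Section Aux.
Variable gT : finGroupType.

Lemma words_ind (S : {set gT}) (P : gT -> Prop) :
  P 1 -> (forall s, s \in S -> P s) ->
  (forall y u v, P y -> u \in S -> v \in S -> P (y * u * v)) ->
  forall n (c : 'I_n -> gT), (forall i, c i \in S) -> P (\prod_i c i).
Proof.
move=> P1 PS P2.
suff H : forall n, (forall c : 'I_n -> gT, (forall i, c i \in S) -> P (\prod_i c i))
  /\ (forall c : 'I_n.+1 -> gT, (forall i, c i \in S) -> P (\prod_i c i)).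
  by move=> n; case: (H n).
elim=> [|n [IH1 IH2]].
  split=> c Hc; first by rewrite big_ord0.
  by rewrite big_ord1; apply: PS.
split=> // c Hc.
rewrite big_ord_recr big_ord_recr /=.
apply: P2; [exact: IH1 | exact: Hc | exact: Hc].
Qed.

End Aux.

Theorem corollary2p7 (gT : finGroupType) (sigma : {perm gT}) (S : {set gT})
  (k : graph_kind) :
  4 <= #|[set: gT]| ->
  sigma \in Aut [set: gT] -> #[sigma] = 2 ->
  S^-1 = S ->
  undirected sigma k S ->
  (connected_graph sigma k S <-> <<S>> = [set: gT]).
Proof.
move=> _ Aut_s ord_s symS und.
have sM : forall x y, sigma (x * y) = sigma x * sigma y.
  by move=> x y; move/morphicP: (Aut_morphic Aut_s); apply; rewrite inE.
have s1 : sigma 1 = 1.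
  by apply: (mulgI (sigma 1)); rewrite -sM !mulg1.
have sV : forall x, sigma x^-1 = (sigma x)^-1.
  by move=> x; apply: (mulgI (sigma x)); rewrite -sM !mulgV.
have ss : forall x, sigma (sigma x) = x.
  have E : sigma * sigma = 1 by rewrite -(expg_order sigma) ord_s expgS expg1.
  by move=> x; rewrite -permM E perm1.
have sJ : forall x y, sigma (x ^ y) = sigma x ^ sigma y.
  by move=> x y; rewrite /conjg !sM sV.
have SV : forall s, (s^-1 \in S) = (s \in S).
  by move=> s; rewrite -{2}symS inE.
have symE : symmetric (adj_rel sigma k S).
  by move=> x y; rewrite /adj_rel und.
have edge : forall x s, s \in S -> adj_rel sigma k S x (edge_target sigma k x s).
  move=> x s Hs; rewrite /adj_rel card_gt0; apply/set0Pn; exists s.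
  by rewrite inE Hs eqxx.
have redge : forall x y, adj_rel sigma k S x y ->
    exists2 s, s \in S & edge_target sigma k x s = y.
  move=> x y; rewrite /adj_rel card_gt0 => /set0Pn [s]; rewrite inE => /andP[Hs /eqP E].
  by exists s.
have sH : (forall z, z \in S -> sigma z \in S) ->
    forall h, h \in <<S>> -> sigma h \in <<S>>.
  move=> sS h /gen_prodgP [n [c Hc ->]].
  rewrite (big_morph sigma sM s1); apply: group_prod => i _.
  by rewrite mem_gen ?sS.
have key : (forall x s, x \in <<S>> -> s \in S ->
               edge_target sigma k x s \in <<S>>) /\
           (forall s, s \in S -> exists2 t, t \in S & edge_target sigma k 1 t = s) /\
           (forall x u v, u \in S -> v \in S -> exists2 a, a \in S &
               exists2 b, b \in S &
               edge_target sigma k (edge_target sigma k x a) b = x * u * v).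
  case: k und symE edge redge => und symE edge redge.
  -
    have nS : forall z x, z \in S -> z ^ x \in S.
      move=> z x Hz.
      have := edge x z Hz; rewrite symE => /redge [s Hs /= E].
      suff -> : z ^ x = s by [].
      apply: (mulgI ((x^-1 * z)^-1)); by rewrite E invMg invgK conjgE !mulgA mulgK mulVg mul1g.
    split; [|split].
    + by move=> x s Hx Hs /=; apply: groupM; [rewrite groupV|apply: mem_gen].
    + by move=> s Hs; exists s => //=; rewrite invg1 mul1g.
    + move=> x u v Hu Hv; exists (x * u^-1 * x^-1).
        by have := nS (u^-1) (x^-1); rewrite SV /conjg invgK mulgA; apply.
      exists v => //=; congr (_ * v).
      by rewrite -!mulgA mulKg invMg !invgK.
  -
    have sS : forall z, z \in S -> sigma z \in S.
      move=> z Hz.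
      have := edge 1 z Hz; rewrite symE => /redge [s Hs /= E].
      have E' : sigma (1 * z) * s = 1 by rewrite -[sigma (1 * z) * s]ss E s1.
      rewrite mul1g in E'.
      have /eqP Ei : (sigma z)^-1 == s by rewrite eq_invg_mul E'.
      by rewrite -(invgK (sigma z)) Ei SV.
    split; [|split].
    + move=> x s Hx Hs /=; apply: sH => //; apply: groupM => //; exact: mem_gen.
    + move=> s Hs; exists (sigma s); [exact: sS | by rewrite /= mul1g ss].
    + move=> x u v Hu Hv; exists u => //; exists (sigma v); first exact: sS.
      by rewrite /= sM !ss.
  -
    have nS' : forall z x, z \in S -> sigma (z ^ x) \in S.
      move=> z x Hz.
      have := edge x z Hz; rewrite symE => /redge [s Hs /= E].
      have E' : (sigma (x^-1 * z))^-1 * s = sigma x by apply: (@perm_inj _ sigma); rewrite ss E.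
      suff -> : sigma (z ^ x) = s by [].
      apply: (mulgI ((sigma (x^-1 * z))^-1)).
      by rewrite E' conjgE mulgA [sigma (x^-1 * z * x)]sM mulKg.
    have sS : forall z, z \in S -> sigma z \in S.
      by move=> z Hz; have := nS' z 1 Hz; rewrite conjg1.
    have nS : forall z x, z \in S -> z ^ x \in S.
      by move=> z g Hz; have := nS' (sigma z) (sigma g) (sS _ Hz); rewrite sJ !ss.
    split; [|split].
    + move=> x s Hx Hs /=; apply: (sH sS); apply: groupM; [by rewrite groupV | exact: mem_gen].
    + move=> s Hs; exists (sigma s); [exact: sS | by rewrite /= invg1 mul1g ss].
    + move=> x u v Hu Hv; exists (x * u^-1 * x^-1).
        by have := nS (u^-1) (x^-1); rewrite SV /conjg invgK mulgA; apply.
      exists (sigma v); first exact: sS.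
      rewrite /= sM sV !ss; congr (_ * v).
      by rewrite -!mulgA mulKg invMg !invgK.
have [clos [one two]] := key.
split.
- move=> conn; apply/eqP; rewrite eqEsubset subsetT /=; apply/subsetP => y _.
  have gen : forall p x, x \in <<S>> -> path (adj_rel sigma k S) x p ->
      last x p \in <<S>>.
    elim=> [|z p IH] x Hx //= /andP[exz pth]; apply: IH pth.
    by have [s Hs <-] := redge _ _ exz; apply: clos.
  by have /connectP [p pth ->] := conn 1 y; apply: gen pth; apply: group1.
- move=> HG.
  have c1 : forall y, connect (adj_rel sigma k S) 1 y.
    move=> y; have : y \in <<S>> by rewrite HG inE.
    case/gen_prodgP => n [c Hc ->].
    apply: (@words_ind _ S (fun y => connect (adj_rel sigma k S) 1 y)) => //.
    + move=> s Hs; have [t Ht <-] := one s Hs.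
      by apply: connect1; apply: edge.
    + move=> y' u v cy Hu Hv; apply: (connect_trans cy).
      have [a Ha [b Hb <-]] := two y' u v Hu Hv.
      apply: (connect_trans (connect1 (edge _ _ Ha))).
      by apply: connect1; apply: edge.
  move=> x y; apply: (connect_trans _ (c1 y)).
  by rewrite (sym_connect_sym symE).
Qed.
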